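(* Let $G$ be a digraph on $n$ vertices with $\delta^0(G)\geq n/2$. Let $d\geq0$ and suppose $A,B,S,T$ is a partition of $V(G)$ into sets of sizes $a,b,s,t$ with $t\geq s\geq d+2$ and $b=a+d$. Then $G$ contains a set $M$ of $d+1$ edges in $E(T,S\cup B)\cup E(B,S)$ such that the endvertices of edges of $M$ lying outside $B$ are all distinct (no vertex outside $B$ is an endvertex of two edges of $M$), and each vertex of $B$ is an endvertex of at most one edge of $M\cap E(T,B)$ and at most one edge of $M\cap E(B,S)$. Moreover, if $E(T,S)\neq\emptyset$, then $M$ contains an edge of $E(T,S)$.
   Context: Digraphs have no loops and at most one edge in each direction between two vertices; $\delta^0$ is the minimum semidegree (minimum of all in- and outdegrees). $E(X,Y)$ denotes the set of edges $xy$ of $G$ with $x\in X$ and $y\in Y$. *)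

(* Defs.v *)
From mathcomp Require Import all_boot.

Set Implicit Arguments. Unset Strict Implicit. Unset Printing Implicit Defensive.

(* A digraph on a finite vertex type V: an edge relation with no loops.
   Since it is a relation, there is at most one edge in each direction. *)
Definition loopless (V : finType) (G : rel V) : Prop := forall v, ~~ G v v.

Definition outdeg (V : finType) (G : rel V) (v : V) : nat := #|[set w | G v w]|.
Definition indeg  (V : finType) (G : rel V) (v : V) : nat := #|[set w | G w v]|.

(* delta^0(G) >= n/2, stated without division: 2 * deg >= n for all in/outdegrees *)
Definition min_semideg_half (V : finType) (G : rel V) : Prop :=
  forall v, #|V| <= 2 * outdeg G v /\ #|V| <= 2 * indeg G v.

Definition Eset (V : finType) (G : rel V) (X Y : {set V}) : {set V * V} :=
  [set e | [&& G e.1 e.2, e.1 \in X & e.2 \in Y]].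

Definition incident (V : finType) (M : {set V * V}) (x : V) : {set V * V} :=
  [set e in M | (e.1 == x) || (e.2 == x)].

Definition partition4 (V : finType) (A B S T : {set V}) : Prop :=
  [&& [disjoint A & B], [disjoint A & S], [disjoint A & T],
      [disjoint B & S], [disjoint B & T] & [disjoint S & T]] /\
  A :|: B :|: S :|: T = [set: V].

(* Main.v *)
Require Import Defs.
From mathcomp Require Import all_boot.
From mathcomp Require Import zify.

Set Implicit Arguments. Unset Strict Implicit. Unset Printing Implicit Defensive.

Definition injb (V : finType) (p : V * V -> V) (M : {set V * V}) : bool :=
  [forall e in M, forall f in M, (p e == p f) ==> (e == f)].

Lemma injbP (V : finType) (p : V * V -> V) (M : {set V * V}) :
  reflect (forall e f, e \in M -> f \in M -> p e = p f -> e = f) (injb p M).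
Proof.
apply: (iffP forallP) => [H e f eM fM ef | H e].
  have := H e; rewrite eM /= => /forallP /(_ f); rewrite fM ef eqxx /=.
  by move/eqP.
apply/implyP => eM; apply/forallP => f; apply/implyP => fM; apply/implyP => /eqP.
by move/(H e f eM fM) => ->.
Qed.

Definition goodb (V : finType) (G : rel V) (B S T : {set V}) (M : {set V * V}) :=
  [&& M \subset Eset G T (S :|: B) :|: Eset G B S, injb fst M & injb snd M].

Lemma good_sub (V : finType) (G : rel V) (B S T : {set V}) (M N : {set V * V}) :
  goodb G B S T M -> N \subset M -> goodb G B S T N.
Proof.
move=> /and3P [ME /injbP ti /injbP hi] NM.
apply/and3P; split; first exact: subset_trans NM ME.
  by apply/injbP => e f eN fN; apply: ti; apply: (subsetP NM).
by apply/injbP => e f eN fN; apply: hi; apply: (subsetP NM).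
Qed.

Lemma add_edge (V : finType) (G : rel V) (B S T : {set V}) (M : {set V * V}) u w :
  goodb G B S T M -> (u, w) \in Eset G T (S :|: B) :|: Eset G B S ->
  u \notin [set e.1 | e in M] -> w \notin [set e.2 | e in M] ->
  goodb G B S T ((u, w) |: M) /\ #|(u, w) |: M| = #|M|.+1.
Proof.
move=> /and3P [ME /injbP ti /injbP hi] uwE un wn.
have nM : (u, w) \notin M.
  by apply: contra un => uwM; apply/imsetP; exists (u, w).
split; last by rewrite cardsU1 nM.
apply/and3P; split.
- apply/subsetP => e; rewrite in_setU1 => /orP[/eqP -> //|eM].
  exact: (subsetP ME).
- apply/injbP => e f; rewrite !in_setU1 => /orP[/eqP->|eM] /orP[/eqP->|fM] //=.
  + move=> ef; exfalso; move/negP: un; apply; apply/imsetP; by exists f.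
  + move=> ef; exfalso; move/negP: un; apply; apply/imsetP; by exists e.
  + exact: ti.
- apply/injbP => e f; rewrite !in_setU1 => /orP[/eqP->|eM] /orP[/eqP->|fM] //=.
  + move=> ef; exfalso; move/negP: wn; apply; apply/imsetP; by exists f.
  + move=> ef; exfalso; move/negP: wn; apply; apply/imsetP; by exists e.
  + exact: hi.
Qed.

Lemma subset_card (U : finType) k (X : {set U}) :
  k <= #|X| -> exists2 Y : {set U}, Y \subset X & #|Y| = k.
Proof.
move Hn: #|X| => n; elim: n X Hn => [|n IH] X Hn hk.
  by exists X => //; rewrite Hn; case: k hk.
move: hk; rewrite leq_eqVlt => /orP[/eqP -> | hk]; first by exists X.
have [x xX] : exists x, x \in X by apply/set0Pn; rewrite -card_gt0 Hn.
have Hn' : #|X :\ x| = n by move: (cardsD1 x X); rewrite xX Hn add1n => -[].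
have [Y YX cY] := IH _ Hn' hk.
by exists Y => //; apply: subset_trans YX (subD1set _ _).
Qed.

Lemma exists_max (V : finType) (P : pred {set V * V}) (M0 : {set V * V}) :
  P M0 -> exists2 M : {set V * V}, P M & forall N : {set V * V}, P N -> #|N| <= #|M|.
Proof. by move=> h; case: (@arg_maxnP _ M0 P (fun M : {set V * V} => #|M|) h) => M PM H; exists M. Qed.

Lemma big_matching (V : finType) (G : rel V) (A B S T : {set V}) (d : nat) :
  loopless G -> min_semideg_half G -> partition4 A B S T ->
  #|S| <= #|T| -> d + 2 <= #|S| -> #|B| = #|A| + d ->
  exists2 M, goodb G B S T M & d + 2 <= #|M|.
Proof.
move=> lG deg [/and5P [dAB dAS dAT dBS /andP [dBT dST]] cov] hST hS hB.
have g0 : goodb G B S T set0.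
  by apply/and3P; split; [apply: sub0set| apply/injbP => e f; rewrite inE|
    apply/injbP => e f; rewrite inE].
have [M gM maxM] := exists_max g0.
exists M => //; rewrite leqNgt; apply/negP => small.
have gM' := gM.
move/and3P: gM' => [ME /injbP ti /injbP hi].
have [x xT xn] : exists2 x, x \in T & x \notin [set e.1 | e in M].
  apply/subsetPn/negP => /subset_leq_card.
  move=> h; have := leq_trans (leq_trans hS hST) (leq_trans h (leq_imset_card fst M)).
  by rewrite leqNgt small.
have [y yS yn] : exists2 y, y \in S & y \notin [set e.2 | e in M].
  apply/subsetPn/negP => /subset_leq_card.
  move=> h; have := leq_trans hS (leq_trans h (leq_imset_card snd M)).
  by rewrite leqNgt small.
set N := [set w | G x w & w \in S :|: B].
set N' := [set u | G u y & u \in T :|: B].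
have NM : forall w, w \in N -> w \in [set e.2 | e in M].
  move=> w; rewrite inE => /andP[gxw wSB].
  apply/negPn/negP => wn.
  have [g1 c1] := add_edge gM (u := x) (w := w) (ltac:(
     by apply/setUP; left; rewrite !inE /= gxw xT; rewrite inE in wSB)) xn wn.
  by have := maxM _ g1; rewrite c1 ltnn.
have N'M : forall u, u \in N' -> u \in [set e.1 | e in M].
  move=> u; rewrite inE => /andP[guy uTB].
  apply/negPn/negP => un.
  have uyE : (u, y) \in Eset G T (S :|: B) :|: Eset G B S.
    move: uTB; rewrite !inE /= guy yS /= => /orP[-> //|->]; by rewrite orbT.
  have [g1 c1] := add_edge gM uyE un yn.
  by have := maxM _ g1; rewrite c1 ltnn.
(* no augmenting path of length 3 *)
have noaug : forall e, e \in M -> e.2 \in N -> e.1 \in N' -> False.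
  move=> e eM; rewrite !inE => /andP[gxe eSB] /andP[gey eTB].
  have gD := good_sub gM (subD1set M e).
  have e1n : e.1 \notin [set f.1 | f in M :\ e].
    apply/imsetP => -[f]; rewrite !inE => /andP[fe fM] ef.
    by move/negP: fe; apply; apply/eqP; apply: ti.
  have e2n : e.2 \notin [set f.2 | f in M :\ e].
    apply/imsetP => -[f]; rewrite !inE => /andP[fe fM] ef.
    by move/negP: fe; apply; apply/eqP; apply: hi.
  have ynD : y \notin [set f.2 | f in M :\ e].
    apply: contra yn => /imsetP [f]; rewrite !inE => /andP[_ fM] ->.
    by apply/imsetP; exists f.
  have xnD : x \notin [set f.1 | f in M :\ e].
    apply: contra xn => /imsetP [f]; rewrite !inE => /andP[_ fM] ->.
    by apply/imsetP; exists f.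
  have uyE : (e.1, y) \in Eset G T (S :|: B) :|: Eset G B S.
    move: eTB; rewrite !inE /= gey yS /= => /orP[-> //|->]; by rewrite orbT.
  have [g1 c1] := add_edge gD uyE e1n ynD.
  have xeE : (x, e.2) \in Eset G T (S :|: B) :|: Eset G B S.
    by apply/setUP; left; rewrite !inE /= gxe xT.
  have xn2 : x \notin [set f.1 | f in (e.1, y) |: (M :\ e)].
    rewrite imsetU1 in_setU1 /= negb_or xnD andbT.
    apply: contra xn => /eqP ->; by apply/imsetP; exists e.
  have en2 : e.2 \notin [set f.2 | f in (e.1, y) |: (M :\ e)].
    rewrite imsetU1 in_setU1 /= negb_or e2n andbT.
    apply: contra yn => /eqP <-; by apply/imsetP; exists e.
  have [g2 c2] := add_edge g1 xeE xn2 en2.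
  have := maxM _ g2; rewrite c2 c1.
  have := cardsD1 e M; rewrite eM => ->.
  by rewrite add1n ltnS ltnn.
set X := [set e in M | e.2 \in N].
set Y := [set e in M | e.1 \in N'].
have cN : #|N| <= #|X|.
  apply: leq_trans (leq_imset_card snd X); apply: subset_leq_card.
  apply/subsetP => w wN; have /imsetP [e eM ew] := NM w wN.
  by apply/imsetP; exists e => //; rewrite inE eM -ew.
have cN' : #|N'| <= #|Y|.
  apply: leq_trans (leq_imset_card fst Y); apply: subset_leq_card.
  apply/subsetP => u uN; have /imsetP [e eM eu] := N'M u uN.
  by apply/imsetP; exists e => //; rewrite inE eM -eu.
have cXY : #|X| + #|Y| <= #|M|.
  have XY0 : X :&: Y = set0.
    apply/setP => e; rewrite [e \in set0]inE; apply/negP.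
    rewrite in_setI /X /Y !in_set => /andP[/andP[eM h2] /andP[_ h1]].
    by apply: (noaug e eM); rewrite !inE.
  rewrite -cardsUI XY0 cards0 addn0; apply: subset_leq_card.
  by apply/subsetP => e; rewrite !inE => /orP[]/andP[].
have cV : #|V| = #|A| + #|B| + #|S| + #|T|.
  rewrite -cardsT -cov !cardsU.
  have -> : A :&: B = set0 by apply/setP => v; rewrite !inE;
    case vB: (v \in B); rewrite ?andbF // (disjointFl dAB vB).
  have -> : (A :|: B) :&: S = set0 by apply/setP => v; rewrite !inE;
    case vS: (v \in S); rewrite ?andbF // (disjointFl dAS vS) (disjointFl dBS vS).
  have -> : (A :|: B :|: S) :&: T = set0 by apply/setP => v; rewrite !inE;
    case vT: (v \in T); rewrite ?andbF // (disjointFl dAT vT) (disjointFl dBT vT)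
      (disjointFl dST vT).
  rewrite !cards0 !subn0 //.
have cout : outdeg G x <= #|A| + #|T :\ x| + #|N|.
  apply: leq_trans (_ : #|A :|: T :\ x :|: N| <= _); last first.
    rewrite !cardsU; set a1 := #|_ :&: _|; set a2 := #|_ :&: _|.
    by move: a1 a2 => a1 a2; clear; lia.
  apply: subset_leq_card; apply/subsetP => w; rewrite inE => gxw.
  have wx : w != x by apply/eqP => wx; move: gxw; rewrite wx (negbTE (lG x)).
  move: (cov) => /setP /(_ w); rewrite !inE gxw wx /=.
  by case: (w \in A); case: (w \in B); case: (w \in S); case: (w \in T).
have cin : indeg G y <= #|A| + #|S :\ y| + #|N'|.
  apply: leq_trans (_ : #|A :|: S :\ y :|: N'| <= _); last first.
    rewrite !cardsU; set a1 := #|_ :&: _|; set a2 := #|_ :&: _|.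
    by move: a1 a2 => a1 a2; clear; lia.
  apply: subset_leq_card; apply/subsetP => w; rewrite inE => gwy.
  have wy : w != y by apply/eqP => wy; move: gwy; rewrite wy (negbTE (lG y)).
  move: (cov) => /setP /(_ w); rewrite !inE gwy wy /=.
  by case: (w \in A); case: (w \in B); case: (w \in S); case: (w \in T).
have := cardsD1 x T; have := cardsD1 y S; rewrite xT yS.
have [dx _] := deg x; have [_ dy] := deg y.
move: cN cN' cXY cV cout cin dx dy small hB; clear; lia.
Qed.

Lemma finish (V : finType) (G : rel V) (A B S T : {set V}) (d : nat)
  (M : {set V * V}) :
  partition4 A B S T -> goodb G B S T M -> #|M| = d.+1 ->
  (Eset G T S != set0 -> M :&: Eset G T S != set0) ->
    [/\ #|M| = d.+1,
        M \subset Eset G T (S :|: B) :|: Eset G B S,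
        (forall x, x \notin B -> #|incident M x| <= 1),
        (forall v, v \in B ->
           #|incident (M :&: Eset G T B) v| <= 1 /\
           #|incident (M :&: Eset G B S) v| <= 1)
      & (Eset G T S != set0 -> M :&: Eset G T S != set0)].
Proof.
move=> [/and5P [dAB dAS dAT dBS /andP [dBT dST]] cov] gM cM hE.
have gM' := gM; move/and3P: gM' => [ME /injbP ti /injbP hi].
have Emem : forall e, e \in M ->
    ((e.1 \in T) || (e.1 \in B)) && ((e.2 \in S) || (e.2 \in B)).
  move=> e /(subsetP ME); rewrite !inE.
  by case/orP => /and3P[_ ->]; [case/orP => ->|move=> ->]; rewrite ?orbT.
split => //.
- move=> x xB; apply/card_le1_eqP => e f; rewrite !inE.
  move=> /andP[eM ex] /andP[fM fx].
  move: (Emem e eM) (Emem f fM).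
  case/orP: ex => /eqP ex; case/orP: fx => /eqP fx.
  + by move=> _ _; apply: ti; rewrite ?ex ?fx.
  + rewrite ex fx (negbTE xB) !orbF => /andP[xT _] /andP[_ xS].
    by rewrite (disjointFl dST xT) in xS.
  + rewrite ex fx (negbTE xB) !orbF => /andP[_ xS] /andP[xT _].
    by rewrite (disjointFl dST xT) in xS.
  + by move=> _ _; apply: hi; rewrite ?ex ?fx.
- move=> v vB; split; apply/card_le1_eqP => e f; rewrite !inE.
  + move=> /andP[/andP[eM /and3P[_ eT _]] ex] /andP[/andP[fM /and3P[_ fT _]] fx].
    apply: hi => //.
    have e2 : e.2 == v.
      case/orP: ex => // /eqP ev; by rewrite ev (disjointFr dBT vB) in eT.
    have f2 : f.2 == v.
      case/orP: fx => // /eqP fv; by rewrite fv (disjointFr dBT vB) in fT.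
    by rewrite (eqP e2) (eqP f2).
  + move=> /andP[/andP[eM /and3P[_ _ eS]] ex] /andP[/andP[fM /and3P[_ _ fS]] fx].
    apply: ti => //.
    have e2 : e.1 == v.
      case/orP: ex => // /eqP ev; by rewrite ev (disjointFr dBS vB) in eS.
    have f2 : f.1 == v.
      case/orP: fx => // /eqP fv; by rewrite fv (disjointFr dBS vB) in fS.
    by rewrite (eqP e2) (eqP f2).
Qed.

Theorem proposition5p6 (V : finType) (G : rel V) (A B S T : {set V}) (d : nat) :
  loopless G ->
  min_semideg_half G ->
  partition4 A B S T ->
  #|S| <= #|T| -> d + 2 <= #|S| -> #|B| = #|A| + d ->
  exists M : {set V * V},
    [/\ #|M| = d.+1,
        M \subset Eset G T (S :|: B) :|: Eset G B S,
        (forall x, x \notin B -> #|incident M x| <= 1),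
        (forall v, v \in B ->
           #|incident (M :&: Eset G T B) v| <= 1 /\
           #|incident (M :&: Eset G B S) v| <= 1)
      & (Eset G T S != set0 -> M :&: Eset G T S != set0)].
Proof.
move=> lG deg part hST hS hB.
have [M gM cM] := big_matching lG deg part hST hS hB.
have gM' := gM; move/and3P: gM' => [ME /injbP ti /injbP hi].
case: (boolP (Eset G T S == set0)) => [/eqP E0 | En].
  have [Y YM cY] := subset_card (k := d.+1) (X := M) (ltac:(by apply: (leq_trans _ cM); rewrite addn2)).
  exists Y; have [h1 h2 h3 h4 _] := finish part (good_sub gM YM) cY
    (ltac:(by rewrite E0 eqxx)).
  by split.
have [[x y] xyE] := set0Pn _ En.
set M1 := [set e in M | (e.1 != x) && (e.2 != y)].
have c1 : d <= #|M1|.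
  have s1 : #|[set e in M | e.1 == x]| <= 1.
    apply/card_le1_eqP => e f; rewrite !inE => /andP[eM /eqP ex] /andP[fM /eqP fx].
    by apply: ti; rewrite ?ex ?fx.
  have s2 : #|[set e in M | e.2 == y]| <= 1.
    apply/card_le1_eqP => e f; rewrite !inE => /andP[eM /eqP ex] /andP[fM /eqP fx].
    by apply: hi; rewrite ?ex ?fx.
  have sub : M \subset M1 :|: [set e in M | e.1 == x] :|: [set e in M | e.2 == y].
    apply/subsetP => e eM; rewrite !inE eM /=.
    by case: (e.1 == x); case: (e.2 == y).
  have := subset_leq_card sub; rewrite !cardsU.
  set a1 := #|_ :&: _|; set a2 := #|_ :&: _|.
  move: a1 a2 s1 s2 cM => a1 a2; clear; lia.
have [Y YM cY] := subset_card c1.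
have gY : goodb G B S T Y.
  apply: good_sub gM (subset_trans YM _); apply/subsetP => e; rewrite inE.
  by case/andP.
have xyE' : (x, y) \in Eset G T (S :|: B) :|: Eset G B S.
  move: xyE; rewrite !inE /= => /and3P[-> -> ->]; by [].
have xn : x \notin [set e.1 | e in Y].
  apply/imsetP => -[e /(subsetP YM)]; rewrite inE => /andP[_ /andP[h _]] ex.
  by rewrite ex eqxx in h.
have yn : y \notin [set e.2 | e in Y].
  apply/imsetP => -[e /(subsetP YM)]; rewrite inE => /andP[_ /andP[_ h]] ey.
  by rewrite ey eqxx in h.
have [g2 c2] := add_edge gY xyE' xn yn.
have hh : Eset G T S != set0 -> ((x, y) |: Y) :&: Eset G T S != set0.
  move=> _; apply/set0Pn; exists (x, y); by rewrite inE setU11 xyE.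
exists ((x, y) |: Y).
have [h1 h2 h3 h4 h5] := finish part g2 (ltac:(by rewrite c2 cY)) hh.
by split => // _; apply: hh.
Qed.
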